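(* Let $n \ge 1$, let $\mathbf{W}_1, \mathbf{W}_2 \in \mathbb{R}^{n\times n}$, let $\mathbf{x}, \mathbf{y} \in \mathbb{R}^n$, and let $p \in [0,1]$ with $p \neq \tfrac12$. Define $$L_p^{AID} = \mathbb{E}\big[\|\mathbf{W}_2\, \mathrm{AID}_p(\mathbf{W}_1\mathbf{x}) - \mathbf{y}\|_2^2\big],\qquad L_p = \|\mathbf{W}_2\, r_p(\mathbf{W}_1\mathbf{x}) - \mathbf{y}\|_2^2,$$ $$R_p = \Big\|\mathbf{W}_2\big(\tfrac12 \mathbf{W}_1\mathbf{x}\big) - \mathbf{W}_2\, r_p(\mathbf{W}_1\mathbf{x})\Big\|_2^2,$$ where the expectation is over the randomness of $\mathrm{AID}_p$. Then $$L_p^{AID} \ge L_p + \frac{4p(1-p)}{n(2p-1)^2}\, R_p.$$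
   Context: For $\mathbf{v} = (v_1,\dots,v_n)\in\mathbb{R}^n$, $\mathrm{AID}_p(\mathbf{v})$ is the random vector with coordinates $\mathrm{AID}_p(\mathbf{v})_i = p_i v_i$ if $v_i \ge 0$ and $(1-p_i)v_i$ if $v_i<0$, where $p_1,\dots,p_n$ are independent $\mathrm{Bernoulli}(p)$ random variables (equivalently, dropout with rate $1-p$ on nonnegative entries and rate $p$ on negative entries, without rescaling). The modified leaky ReLU $r_p$ acts coordinatewise by $r_p(x) = \tfrac12 x + (p - \tfrac12)|x|$, i.e. $r_p(x) = p x$ for $x\ge 0$ and $(1-p)x$ for $x<0$ (this is the mean of $\mathrm{AID}_p$). $\|\cdot\|_2$ is the Euclidean norm. *)

(* Defs.v *)
From HB Require Import structures.
From mathcomp Require Import all_boot all_order all_algebra.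
Set Implicit Arguments. Unset Strict Implicit. Unset Printing Implicit Defensive.
Import Order.TTheory GRing.Theory Num.Theory.
Local Open Scope ring_scope.

Section AID.
Variable R : realFieldType.
Variable n : nat.

Definition norm2sq (v : 'cV[R]_n) : R := \sum_(i < n) (v i 0) ^+ 2.

Definition rp (p x : R) : R := if 0 <= x then p * x else (1 - p) * x.
Definition rp_vec (p : R) (v : 'cV[R]_n) : 'cV[R]_n := \col_i rp p (v i 0).

(* AID_p(v) for a given outcome b of the Bernoulli vector (b i = true <-> p_i = 1) *)
Definition AID_outcome (b : {ffun 'I_n -> bool}) (v : 'cV[R]_n) : 'cV[R]_n :=
  \col_i (if 0 <= v i 0 then (b i)%:R * v i 0 else (1 - (b i)%:R) * v i 0).

(* probability of the outcome b when p_1..p_n are independent Bernoulli(p) *)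
Definition bern_weight (p : R) (b : {ffun 'I_n -> bool}) : R :=
  \prod_(i < n) (if b i then p else 1 - p).

Definition E_AID (p : R) (v : 'cV[R]_n) (F : 'cV[R]_n -> R) : R :=
  \sum_(b : {ffun 'I_n -> bool}) bern_weight p b * F (AID_outcome b v).

Definition L_AID (p : R) (W1 W2 : 'M[R]_n) (x y : 'cV[R]_n) : R :=
  E_AID p (W1 *m x) (fun z => norm2sq (W2 *m z - y)).

Definition L_p (p : R) (W1 W2 : 'M[R]_n) (x y : 'cV[R]_n) : R :=
  norm2sq (W2 *m rp_vec p (W1 *m x) - y).

Definition R_p (p : R) (W1 W2 : 'M[R]_n) (x : 'cV[R]_n) : R :=
  norm2sq (W2 *m ((1/2 : R) *: (W1 *m x)) - W2 *m rp_vec p (W1 *m x)).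
End AID.

(* Main.v *)
Require Import Defs.
From HB Require Import structures.
From mathcomp Require Import all_boot all_order all_algebra.
From mathcomp Require Import ring lra.
Import Order.TTheory GRing.Theory Num.Theory.
Local Open Scope ring_scope.

Definition wb {R : realFieldType} (p : R) (x : bool) : R := if x then p else 1 - p.

Lemma E_prod (R : realFieldType) (n : nat) (p : R) (h : 'I_n -> bool -> R) :
  \sum_(b : {ffun 'I_n -> bool}) bern_weight p b * \prod_i h i (b i)
  = \prod_i (p * h i true + (1 - p) * h i false).
Proof.
transitivity (\prod_i \sum_(x : bool) wb p x * h i x); last first.
  by apply: eq_bigr => i _; rewrite big_bool.
rewrite bigA_distr_bigA /=; apply: eq_bigr => b _.
rewrite /bern_weight -big_split /=; apply: eq_bigr => i _ //.
Qed.

Lemma prod_if1 (R : realFieldType) (n : nat) (i : 'I_n) (A : R) :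
  \prod_(k < n) (if k == i then A else 1) = A.
Proof.
by rewrite (bigD1 i) //= eqxx big1 ?mulr1 // => k /negbTE ->.
Qed.

Lemma cs_sum (R : realFieldType) (n : nat) (a : 'I_n -> R) :
  (\sum_i a i) ^+ 2 <= n%:R * \sum_i a i ^+ 2.
Proof.
have H : 0 <= \sum_(i < n) \sum_(j < n) (a i - a j) ^+ 2.
  by apply: sumr_ge0 => i _; apply: sumr_ge0 => j _; apply: sqr_ge0.
have E : \sum_(i < n) \sum_(j < n) (a i - a j) ^+ 2 =
   2 * (n%:R * \sum_i a i ^+ 2) - 2 * (\sum_i a i) ^+ 2.
  transitivity (\sum_(i < n) \sum_(j < n) (a i ^+ 2 + a j ^+ 2 - 2 * (a i * a j))).
    by apply: eq_bigr => i _; apply: eq_bigr => j _; ring.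
  rewrite expr2 mulr_suml.
  under eq_bigr => i _ do rewrite sumrB big_split /= sumr_const card_ord -mulr_sumr -mulr_sumr.
  rewrite sumrB big_split /= sumr_const card_ord -!mulr_sumr.
  have HT : \sum_(i < n) a i * (\sum_(j < n) a j) = \sum_(i < n) \sum_(j < n) a i * a j.
    by apply: eq_bigr => i _; rewrite mulr_sumr.
  rewrite HT sumrMnl -mulr_natl; ring.
rewrite E subr_ge0 in H.
by rewrite -(ler_pM2l (_ : 0 < 2)) //.
Qed.

Definition zf {R : realFieldType} {n : nat} (v : 'cV[R]_n) (i : 'I_n) (x : bool) : R :=
  if 0 <= v i 0 then x%:R * v i 0 else (1 - x%:R) * v i 0.

Lemma prod_ifF (R : realFieldType) (n : nat) (i : 'I_n) (F : 'I_n -> R) :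
  \prod_(k < n) (if k == i then F k else 1) = F i.
Proof.
by rewrite (bigD1 i) //= eqxx big1 ?mulr1 // => k /negbTE ->.
Qed.

Arguments E_prod {R n}.
Arguments prod_ifF {R n}.

Lemma mean1 (R : realFieldType) (n : nat) (p : R) (v : 'cV[R]_n) i :
  p * zf v i true + (1 - p) * zf v i false = rp p (v i 0).
Proof. rewrite /zf /rp; case: ifP => _ /=; ring. Qed.

Lemma mom2 (R : realFieldType) (n : nat) (p : R) (v : 'cV[R]_n) i :
  p * zf v i true ^+ 2 + (1 - p) * zf v i false ^+ 2 =
  rp p (v i 0) ^+ 2 + p * (1 - p) * v i 0 ^+ 2.
Proof. rewrite /zf /rp; case: ifP => _ /=; ring. Qed.

Lemma E0 (R : realFieldType) (n : nat) (p : R) :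
  \sum_(b : {ffun 'I_n -> bool}) bern_weight p b = 1.
Proof.
transitivity (\sum_(b : {ffun 'I_n -> bool}) bern_weight p b * \prod_(k < n) (fun _ _ => 1 : R) k (b k)).
  by apply: eq_bigr => b _; rewrite big1 ?mulr1.
rewrite (E_prod p (fun _ _ => 1)); apply: big1 => i _; ring.
Qed.

Lemma E1 (R : realFieldType) (n : nat) (p : R) (v : 'cV[R]_n) j :
  \sum_(b : {ffun 'I_n -> bool}) bern_weight p b * zf v j (b j) = rp p (v j 0).
Proof.
transitivity (\sum_(b : {ffun 'I_n -> bool}) bern_weight p b *
   \prod_(k < n) (fun k x => if k == j then zf v k x else 1) k (b k)).
  by apply: eq_bigr => b _; rewrite (prod_ifF j (fun k => zf v k (b k))).
rewrite (E_prod p (fun k x => if k == j then zf v k x else 1)).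
rewrite -(prod_ifF j (fun k => rp p (v k 0))); apply: eq_bigr => k _ /=.
case: ifP => [/eqP -> | _]; [exact: mean1 | ring].
Qed.

Lemma E2 (R : realFieldType) (n : nat) (p : R) (v : 'cV[R]_n) i j :
  \sum_(b : {ffun 'I_n -> bool}) bern_weight p b * (zf v i (b i) * zf v j (b j)) =
  rp p (v i 0) * rp p (v j 0) + (if i == j then p * (1 - p) * v i 0 ^+ 2 else 0).
Proof.
case: (eqVneq i j) => [<- | nij].
  transitivity (\sum_(b : {ffun 'I_n -> bool}) bern_weight p b *
     \prod_(k < n) (fun k x => if k == i then zf v k x ^+ 2 else 1) k (b k)).
    by apply: eq_bigr => b _; rewrite (prod_ifF i (fun k => zf v k (b k) ^+ 2)) expr2.
  rewrite (E_prod p (fun k x => if k == i then zf v k x ^+ 2 else 1)).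
  rewrite -(prod_ifF i (fun k => rp p (v k 0) ^+ 2 + p * (1 - p) * v k 0 ^+ 2)).
  apply: eq_bigr => k _ /=.
  by case: ifP => [/eqP -> | _]; [exact: mom2 | ring].
transitivity (\sum_(b : {ffun 'I_n -> bool}) bern_weight p b *
   \prod_(k < n) (fun k x => (if k == i then zf v k x else 1) * (if k == j then zf v k x else 1)) k (b k)).
  apply: eq_bigr => b _; rewrite big_split /= (prod_ifF i (fun k => zf v k (b k))).
  by rewrite (prod_ifF j (fun k => zf v k (b k))).
rewrite (E_prod p (fun k x => (if k == i then zf v k x else 1) * (if k == j then zf v k x else 1))) addr0.
rewrite -(prod_ifF i (fun k => rp p (v k 0))) -(prod_ifF j (fun k => rp p (v k 0))).
rewrite -big_split /=; apply: eq_bigr => k _.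
case: (eqVneq k i) => [-> | _]; first by rewrite (negbTE nij) -mean1; ring.
case: ifP => _; rewrite -?mean1; ring.
Qed.

Lemma Esq (R : realFieldType) (n : nat) (p : R) (v : 'cV[R]_n) (a : 'I_n -> R) (c : R) :
  \sum_(b : {ffun 'I_n -> bool}) bern_weight p b * (\sum_i a i * zf v i (b i) - c) ^+ 2
  = (\sum_i a i * rp p (v i 0) - c) ^+ 2 + \sum_i a i ^+ 2 * (p * (1 - p) * v i 0 ^+ 2).
Proof.
have pw : forall b : {ffun 'I_n -> bool},
  bern_weight p b * (\sum_i a i * zf v i (b i) - c) ^+ 2 =
  \sum_i \sum_j (a i * a j) * (bern_weight p b * (zf v i (b i) * zf v j (b j)))
  - 2 * c * \sum_i a i * (bern_weight p b * zf v i (b i)) + c ^+ 2 * bern_weight p b.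
  move=> b; set S := \sum_i a i * zf v i (b i).
  have e1 : bern_weight p b * S = \sum_i a i * (bern_weight p b * zf v i (b i)).
    by rewrite /S mulr_sumr; apply: eq_bigr => i _; ring.
  have e2 : bern_weight p b * S * S =
     \sum_i \sum_j (a i * a j) * (bern_weight p b * (zf v i (b i) * zf v j (b j))).
    rewrite e1 mulr_suml; apply: eq_bigr => i _; rewrite /S mulr_sumr.
    by apply: eq_bigr => j _; ring.
  rewrite -e1 -e2; ring.
rewrite (eq_bigr _ (fun b _ => pw b)) big_split sumrB /=.
rewrite -!mulr_sumr E0.
rewrite [X in _ - 2 * c * X]exchange_big /=.
under [X in _ - 2 * c * X]eq_bigr => i _ do rewrite -mulr_sumr E1.
rewrite exchange_big /=.
under eq_bigr => i _ do rewrite exchange_big /=.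
under eq_bigr => i _ do under eq_bigr => j _ do rewrite -mulr_sumr E2.
have H1 : forall i, \sum_j a i * a j * (rp p (v i 0) * rp p (v j 0) +
          (if i == j then p * (1 - p) * v i 0 ^+ 2 else 0)) =
     \sum_j (a i * rp p (v i 0)) * (a j * rp p (v j 0)) + a i ^+ 2 * (p * (1 - p) * v i 0 ^+ 2).
  move=> i; rewrite (bigD1 i) //= (bigD1 i (P := predT)) //= eqxx.
  rewrite (eq_bigr (fun j => a i * rp p (v i 0) * (a j * rp p (v j 0)))); first ring.
  by move=> j /negbTE nij; rewrite eq_sym nij; ring.
under eq_bigr => i _ do rewrite H1.
rewrite big_split /=.
have -> : \sum_i \sum_j (a i * rp p (v i 0)) * (a j * rp p (v j 0)) =
   (\sum_i a i * rp p (v i 0)) ^+ 2.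
  by rewrite expr2 mulr_suml; apply: eq_bigr => i _; rewrite mulr_sumr.
ring.
Qed.

Theorem theorem1 (R : realFieldType) (n : nat) (W1 W2 : 'M[R]_n)
    (x y : 'cV[R]_n) (p : R) :
  (0 < n)%N -> 0 <= p <= 1 -> p != 1/2 ->
  L_AID p W1 W2 x y >=
    L_p p W1 W2 x y
    + (4 * p * (1 - p)) / (n%:R * (2 * p - 1) ^+ 2) * R_p p W1 W2 x.
Proof.
move=> n0 /andP[p0 p1] ph.
set v := W1 *m x.
set var := fun i : 'I_n => p * (1 - p) * v i 0 ^+ 2.
have HA : L_AID p W1 W2 x y = L_p p W1 W2 x y + \sum_k \sum_i W2 k i ^+ 2 * var i.
  rewrite /L_AID /E_AID /L_p /norm2sq.
  under eq_bigr => b _ do rewrite mulr_sumr.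
  rewrite exchange_big /= -big_split /=; apply: eq_bigr => k _.
  have -> : (W2 *m rp_vec p v - y) k 0 = \sum_i W2 k i * rp p (v i 0) - y k 0.
    by rewrite !mxE; congr (_ - _); apply: eq_bigr => i _; rewrite /AID_outcome !mxE.
  rewrite /var -(@Esq R n p v (fun i => W2 k i) (y k 0)); apply: eq_bigr => b _; congr (_ * (_ ^+ 2)).
  rewrite !mxE; apply: (congr1 (fun s => s - y k 0)); apply: eq_bigr => i _; by rewrite /AID_outcome mxE.
have HR : R_p p W1 W2 x = \sum_k (\sum_i W2 k i * ((1/2) * v i 0 - rp p (v i 0))) ^+ 2.
  rewrite /R_p /norm2sq; apply: eq_bigr => k _; congr (_ ^+ 2).
  rewrite !mxE -sumrB; apply: eq_bigr => i _; rewrite !mxE; ring.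
have Hd : forall i, ((1/2) * v i 0 - rp p (v i 0)) ^+ 2 = (2 * p - 1) ^+ 2 / 4 * v i 0 ^+ 2.
  by move=> i; rewrite /rp; case: ifP => _; field.
rewrite HA HR lerD2l.
have hp : 2 * p - 1 != 0.
  apply: contra ph => /eqP h; apply/eqP; lra.
have hn : (n%:R : R) != 0 by rewrite pnatr_eq0 -lt0n.
have c0 : 0 <= (4 * p * (1 - p)) / (n%:R * (2 * p - 1) ^+ 2).
  apply: divr_ge0; first by apply: mulr_ge0; [apply: mulr_ge0 => //; lra | lra].
  by apply: mulr_ge0; [exact: ler0n | exact: sqr_ge0].
rewrite mulr_sumr; apply: ler_sum => k _.
apply: le_trans; first by apply: ler_wpM2l; [exact: c0 | exact: cs_sum].
rewrite mulr_sumr mulr_sumr; apply: ler_sum => i _; rewrite le_eqVlt; apply/orP; left; apply/eqP.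
rewrite exprMn Hd /var; field.
by rewrite hn hp.
Qed.
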